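(* Let $k\ge 3$ be odd and let $G$ be a $k$-uniform hyperpath of length $r\ge 3$, with Laplacian tensor $\mathcal L$. Then $\lambda(\mathcal L)=2$.
   Context: A $k$-uniform hyperpath of length $d$ has vertex set $\{i_{1,1},\ldots,i_{1,k}\}\cup\{i_{j,s}: 2\le j\le d,\ 2\le s\le k\}$ (all distinct) and edges $\{i_{1,1},\ldots,i_{1,k}\}$ and $\{i_{j-1,k},i_{j,2},\ldots,i_{j,k}\}$ for $2\le j\le d$. For a $k$-uniform hypergraph $G=(V,E)$ with $V=[n]$ and $d_i$ the number of edges containing $i$, the Laplacian tensor $\mathcal L=\mathcal D-\mathcal A$ ($\mathcal D$ diagonal with entries $d_i$, $\mathcal A$ with entries $\frac1{(k-1)!}$ at index tuples forming an edge and $0$ otherwise) satisfies $(\mathcal L\mathbf x^{k-1})_i=d_ix_i^{k-1}-\sum_{e\in E,\,i\in e}\prod_{s\in e\setminus\{i\}}x_s$. A real $\lambda$ is an H-eigenvalue of $\mathcal L$ if some nonzero $\mathbf x\in\mathbb R^n$ satisfies $(\mathcal L\mathbf x^{k-1})_i=\lambda x_i^{k-1}$ for all $i$; $\lambda(\mathcal L)$ is the largest H-eigenvalue. *)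

(* Defs.v *)
From HB Require Import structures.
From mathcomp Require Import all_boot all_order all_algebra.
From mathcomp Require Import reals.
Import Order.TTheory GRing.Theory Num.Theory.
Local Open Scope ring_scope.

Definition hp_valid (k d j s : nat) : bool :=
  ((j == 1%N) && (1 <= s <= k)%N) || ((2 <= j <= d)%N && (2 <= s <= k)%N).

Definition hp_edge1 (n k : nat) (lab : nat -> nat -> 'I_n) : {set 'I_n} :=
  [set v | [exists s : 'I_k.+1, (1 <= s)%N && (v == lab 1%N s)]].

Definition hp_edgej (n k : nat) (lab : nat -> nat -> 'I_n) (j : nat) : {set 'I_n} :=
  lab j.-1 k |: [set v | [exists s : 'I_k.+1, (2 <= s)%N && (v == lab j s)]].

(* E is (the edge set of) a k-uniform hyperpath of length d on vertex set [n]: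
   the vertices are labelled bijectively by the valid pairs (j, s), and the
   edges are exactly {i_{1,1},...,i_{1,k}} and {i_{j-1,k}, i_{j,2},...,i_{j,k}},
   2 <= j <= d. *)
Definition is_hyperpath (k d n : nat) (E : {set {set 'I_n}}) : Prop :=
  exists lab : nat -> nat -> 'I_n,
    [/\ (forall j s j' s', hp_valid k d j s -> hp_valid k d j' s' ->
           lab j s = lab j' s' -> j = j' /\ s = s'),
        (forall v : 'I_n, exists j s, hp_valid k d j s /\ v = lab j s) &
        E = hp_edge1 n k lab |: [set hp_edgej n k lab j | j : 'I_d.+1 & (2 <= j)%N]].

Definition hdeg (n : nat) (E : {set {set 'I_n}}) (i : 'I_n) : nat :=
  #|[set e in E | i \in e]|.

(* Order-k tensors of dimension n, indexed by a first index i and the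
   remaining k-1 indices t : 'I_(k-1) -> 'I_n. *)
Definition tensor (R : Type) (n k : nat) := 'I_n -> {ffun 'I_k.-1 -> 'I_n} -> R.

Definition adj_tensor (R : realType) (n k : nat) (E : {set {set 'I_n}}) : tensor R n k :=
  fun i t => if (i |: [set t j | j : 'I_k.-1]) \in E then ((k.-1)`!)%:R^-1 else 0.

Definition deg_tensor (R : realType) (n k : nat) (E : {set {set 'I_n}}) : tensor R n k :=
  fun i t => if [forall j, t j == i] then (hdeg n E i)%:R else 0.

Definition laplacian (R : realType) (n k : nat) (E : {set {set 'I_n}}) : tensor R n k :=
  fun i t => deg_tensor R n k E i t - adj_tensor R n k E i t.

Definition tmul (R : realType) (n k : nat) (T : tensor R n k) (x : 'I_n -> R) (i : 'I_n) : R :=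
  \sum_(t : {ffun 'I_k.-1 -> 'I_n}) T i t * \prod_(j : 'I_k.-1) x (t j).

Definition is_H_eigenvalue (R : realType) (n k : nat) (T : tensor R n k) (lam : R) : Prop :=
  exists x : 'I_n -> R, (exists i, x i != 0) /\
    forall i, tmul R n k T x i = lam * x i ^+ k.-1.

Definition is_largest_H_eigenvalue (R : realType) (n k : nat) (T : tensor R n k) (lam : R) : Prop :=
  is_H_eigenvalue R n k T lam /\ forall mu, is_H_eigenvalue R n k T mu -> mu <= lam.

(* Main.v *)
Require Import Defs.
From HB Require Import structures.
From mathcomp Require Import all_boot all_order all_algebra.
From mathcomp Require Import reals.
From mathcomp Require Import zify ring lra.
Import Order.TTheory GRing.Theory Num.Theory.
Local Open Scope ring_scope.

Section HSec.
Local Set Implicit Arguments. Local Unset Strict Implicit.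

Lemma card_im_eq n m (T : {set 'I_n}) : #|T| = m ->
  #|[pred t : {ffun 'I_m -> 'I_n} | [set t j | j : 'I_m] == T]| = m`!.
Proof.
move=> cT.
have -> : m`! = #|T| ^_ #|'I_m| by rewrite cT card_ord ffactnn.
rewrite -card_inj_ffuns_on.
apply: eq_card => t; rewrite !inE.
apply/idP/andP => [/eqP imT | [/ffun_onP tT /injectiveP tinj]].
  split; first by apply/ffun_onP => j; rewrite -imT; apply: imset_f.
  apply/injectiveP => j1 j2 e.
  have /imset_injP H : #|[set t j | j : 'I_m]| == #|[pred j : 'I_m | true]|.
    by rewrite imT cT card_ord.
  by apply: H.
rewrite eqEcard; apply/andP; split.
  by apply/subsetP => u /imsetP [j _ ->]; exact: tT.
rewrite card_imset // card_ord cT //.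
Qed.

Lemma sum_im (R : realType) n m (T : {set 'I_n}) (x : 'I_n -> R) : #|T| = m ->
  \sum_(t : {ffun 'I_m -> 'I_n} | [set t j | j : 'I_m] == T) \prod_(j : 'I_m) x (t j)
  = (m`!)%:R * \prod_(u in T) x u.
Proof.
move=> cT.
rewrite [LHS](eq_bigr (fun _ => \prod_(u in T) x u)).
  by rewrite sumr_const card_im_eq // mulr_natl.
move=> t /eqP imT.
have tinj : {in [pred j : 'I_m | true] &, injective t}.
  apply/imset_injP. by rewrite imT cT card_ord.
by rewrite -imT big_imset.
Qed.

Lemma S_eq n m (i : 'I_n) (e : {set 'I_n}) (t : {ffun 'I_m -> 'I_n}) :
  i \in e -> #|e| = m.+1 ->
  (i |: [set t j | j : 'I_m] == e) = ([set t j | j : 'I_m] == e :\ i).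
Proof.
move=> ie ce; apply/eqP/eqP => [He | ->]; last by rewrite setD1K.
apply/eqP; rewrite eq_sym eqEcard; apply/andP; split.
  apply/subsetP => u; rewrite !inE => /andP [ui ue].
  by move: ue; rewrite -He !inE (negPf ui).
have -> : #|e :\ i| = m by move: ce; rewrite (cardsD1 i) ie add1n => -[].
by apply: leq_trans (leq_imset_card _ _) _; rewrite card_ord.
Qed.

Lemma Lform (R : realType) n k (E : {set {set 'I_n}}) (x : 'I_n -> R) i :
  (0 < k)%N -> (forall e, e \in E -> #|e| = k) ->
  tmul R n k (laplacian R n k E) x i =
  \sum_(e in [set e in E | i \in e]) (x i ^+ k.-1 - \prod_(u in e :\ i) x u).
Proof.
move=> k0 cE.
rewrite /tmul /laplacian.
under eq_bigr do rewrite mulrBl.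
rewrite sumrB.
have -> : \sum_(t : {ffun 'I_k.-1 -> 'I_n}) deg_tensor R n k E i t * \prod_(j < k.-1) x (t j)
   = (hdeg n E i)%:R * x i ^+ k.-1.
  rewrite (bigD1 [ffun => i]) //= [X in _ + X]big1 ?addr0.
    rewrite /deg_tensor; case: ifP => [_|/negbT/forallPn [j]]; last by rewrite ffunE eqxx.
    by congr (_ * _); rewrite (eq_bigr (fun _ => x i)) ?prodr_const ?card_ord // => j _; rewrite ffunE.
  move=> t tne; rewrite /deg_tensor; case: ifP; last by rewrite mul0r.
  move=> /forallP H; case/eqP: tne; apply/ffunP => j; rewrite ffunE; exact/eqP.
have -> : \sum_(t : {ffun 'I_k.-1 -> 'I_n}) adj_tensor R n k E i t * \prod_(j < k.-1) x (t j)
   = \sum_(e in [set e in E | i \in e]) \prod_(u in e :\ i) x u.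
  set c := ((k.-1)`!)%:R^-1 : R.
  transitivity (\sum_(t : {ffun 'I_k.-1 -> 'I_n} | (i |: [set t j | j : 'I_k.-1]) \in E)
       c * \prod_(j < k.-1) x (t j)).
    rewrite [RHS]big_mkcond; apply: eq_bigr => t _; rewrite /adj_tensor.
    by case: ifP => _; rewrite ?mul0r.
  rewrite (partition_big (fun t : {ffun 'I_k.-1 -> 'I_n} => i |: [set t j | j : 'I_k.-1]) (mem E)) //=.
  rewrite [RHS](eq_bigl (fun e => (e \in E) && (i \in e))); last by move=> e; rewrite inE.
  rewrite [RHS]big_mkcondr /=; apply: eq_bigr => e eE.
  rewrite (eq_bigl (fun t : {ffun 'I_k.-1 -> 'I_n} => i |: [set t j | j : 'I_k.-1] == e)); last first.
    by move=> t; case: (_ =P e) => [->|]; rewrite ?eE ?andbF.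
  rewrite -mulr_sumr.
  case: ifP => ie; last first.
    rewrite big_pred0 ?mulr0 // => t; apply/negP => /eqP He.
    by move: ie; rewrite -He setU11.
  have ce : #|e| = (k.-1).+1 by rewrite prednK // cE.
  rewrite (eq_bigl (fun t : {ffun 'I_k.-1 -> 'I_n} => [set t j | j : 'I_k.-1] == e :\ i)); last first.
    by move=> t; rewrite S_eq.
  rewrite sum_im; last by move: ce; rewrite (cardsD1 i) ie add1n => -[].
  by rewrite mulrA mulVf ?mul1r // pnatr_eq0 -lt0n fact_gt0.
by rewrite sumrB sumr_const /hdeg mulr_natl.
Qed.

End HSec.

Section ASec.
Local Set Implicit Arguments. Local Unset Strict Implicit.

Lemma oddpowS (R : realType) k (x : R) : odd k -> x ^+ k = x * x ^+ k.-1 /\ 0 <= x ^+ k.-1 /\ (x != 0 -> 0 < x ^+ k.-1).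
Proof.
case: k => // k /= ok; rewrite exprS; split=> //; split.
  by apply: exprn_even_ge0.
move=> x0; rewrite lt_def exprn_even_ge0 // andbT expf_neq0 //.
Qed.

Lemma oddpow_inj (R : realType) k (x w : R) : odd k -> x ^+ k = w ^+ k -> x = w.
Proof.
move=> ok e.
have k0 : (0 < k)%N by case: k ok e.
have [x0|x0] := leP 0 x.
  have w0 : 0 <= w by rewrite -(exprn_odd_ge0 _ ok) -e exprn_odd_ge0.
  apply/eqP; rewrite -(eqrXn2 k0 x0 w0); exact/eqP.
have w0 : w < 0 by rewrite -(exprn_odd_lt0 _ ok) -e exprn_odd_lt0.
suff : - x = - w by move/oppr_inj.
apply/eqP; rewrite -(eqrXn2 k0) ?oppr_ge0 ?ltW //.
by rewrite exprNn [(- w) ^+ k]exprNn e.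
Qed.

Lemma step_lem (R : realType) k (l a b y P P' : R) : 2 < l -> odd k -> a * y <= 0 ->
  (y ^+ k - P) + (y ^+ k - P') = l * y ^+ k -> P = (1 - l) * a ^+ k -> P' = (1 - l) * b ^+ k ->
  0 <= b * y /\ (b = 0 -> a = 0 /\ y = 0).
Proof.
move=> l2 ok ay H HP HP'.
case: (oddpowS a ok) => ea [A0 Ap]; case: (oddpowS b ok) => eb [B0 Bp];
case: (oddpowS y ok) => ey [Y0 Yp].
move: H; rewrite HP HP' ea eb ey; set A := a ^+ k.-1; set B := b ^+ k.-1; set Y := y ^+ k.-1 => H.
have H0 : (l - 1) * (b * B) = (l - 2) * (y * Y) - (l - 1) * (a * A) by lra.
have H1 : (l - 1) * (b * y * B) = (l - 2) * (y * y * Y) - (l - 1) * (a * y * A).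
  have -> : (l - 1) * (b * y * B) = y * ((l - 1) * (b * B)) by ring.
  rewrite H0; ring.
have H2 : 0 <= (l - 1) * (b * y * B).
  rewrite H1 subr_ge0; apply: (@le_trans _ _ 0).
    by apply: mulr_ge0_le0; [lra | apply: mulr_le0_ge0].
  apply: mulr_ge0; [lra| apply: mulr_ge0 => //; nra].
split.
  have [->|b0] := eqVneq b 0; first by rewrite mul0r.
  have := Bp b0 => Bp'.
  have : 0 <= b * y * B by rewrite -(pmulr_rge0 _ (_ : 0 < l - 1)) //; lra.
  by rewrite pmulr_lge0.
move=> b0; move: H1; rewrite b0 !mul0r mulr0 => /esym /eqP; rewrite subr_eq0 => /eqP H3.
have H4 : y * y * Y <= 0.
  have : (l - 2) * (y * y * Y) <= 0.
    by rewrite H3; apply: mulr_ge0_le0; [lra | apply: mulr_le0_ge0].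
  by rewrite pmulr_rle0 //; lra.
have y0 : y = 0.
  apply/eqP/negPn/negP => y0; have := Yp y0 => Yp'.
  have : 0 < y * y * Y by apply: mulr_gt0 => //; rewrite lt_def mulf_neq0 // -expr2 sqr_ge0.
  by rewrite ltNge H4.
split=> //.
move: H0; rewrite b0 y0 !mul0r !mulr0 sub0r => /eqP; rewrite eq_sym oppr_eq0 mulf_eq0 => /orP[/eqP ?|/eqP aA]; first lra.
have : a ^+ k == 0 by rewrite ea aA.
by rewrite expf_eq0 => /andP [_ /eqP].
Qed.

Lemma cancel_pow (R : realType) k (l a y : R) : (0 < k)%N ->
  y * a ^+ k.-1 = (1 - l) * a ^+ k -> a != 0 -> y = (1 - l) * a.
Proof.
move=> k0 H a0; case: k k0 H => // k _ /= H.
have ak : a ^+ k != 0 by rewrite expf_neq0.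
apply: (mulIf ak); rewrite H exprSr; ring.
Qed.

Lemma base_lem (R : realType) k (l a y : R) : 1 < l -> (0 < k)%N ->
  y * a ^+ k.-1 = (1 - l) * a ^+ k -> a * y <= 0.
Proof.
move=> l1 k0 H; have [->|a0] := eqVneq a 0; first by rewrite mul0r.
rewrite (cancel_pow k0 H a0); nra.
Qed.

Lemma end_lem (R : realType) k (l b y : R) : 1 < l -> (0 < k)%N -> 0 <= b * y ->
  y * b ^+ k.-1 = (1 - l) * b ^+ k -> b = 0.
Proof.
move=> l1 k0 by0 H; apply/eqP/negPn/negP => b0.
move: by0; rewrite (cancel_pow k0 H b0).
have : 0 < b * b by rewrite lt_def mulf_neq0 // -expr2 sqr_ge0.
nra.
Qed.

Lemma mid_lem (R : realType) k (l b y y' : R) : 1 < l -> (2 <= k)%N -> 0 <= b * y ->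
  y * y' * b ^+ k.-2 = (1 - l) * b ^+ k -> b * y' <= 0.
Proof.
move=> l1 k2 by0 H; have [->|b0] := eqVneq b 0; first by rewrite mul0r.
have bk : b ^+ k.-2 != 0 by rewrite expf_neq0.
have H2 : y * y' = (1 - l) * (b * b).
  have ek : b ^+ k = b ^+ k.-2 * (b * b).
    by case: k k2 {H bk} => [|[|k]] //= _; rewrite !exprS; ring.
  apply: (mulIf bk); rewrite H ek; ring.
have bb : 0 < b * b by rewrite lt_def mulf_neq0 // -expr2 sqr_ge0.
have H3 : (b * y) * (b * y') = ((1 - l) * (b * b)) * (b * b).
  by rewrite -H2; ring.
rewrite leNgt; apply/negP => p.
have : 0 <= (b * y) * (b * y') by apply: mulr_ge0 => //; exact: ltW.
rewrite H3 pmulr_lge0 // pmulr_lge0 //; lra.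
Qed.

End ASec.


Definition ed n k (lab : nat -> nat -> 'I_n) (j : nat) : {set 'I_n} :=
  if j == 1%N then hp_edge1 n k lab else hp_edgej n k lab j.

Definition Linj k d n (lab : nat -> nat -> 'I_n) := forall j s j' s', hp_valid k d j s -> hp_valid k d j' s' ->
           lab j s = lab j' s' -> j = j' /\ s = s'.

Lemma mem_ed k d n lab j s j' : Linj k d n lab -> (2 <= k)%N -> hp_valid k d j s -> (1 <= j' <= d)%N ->
  (lab j s \in ed n k lab j') = (j' == j) || ((s == k) && (j' == j.+1)).
Proof.
move=> Hinj k2 vjs j'r.
rewrite /ed; case: eqP => [j'1 | j'n1].
  rewrite /hp_edge1 inE; apply/existsP/idP.
    case=> s' /andP [s'1 /eqP e].
    have v' : hp_valid k d 1 s' by move: (ltn_ord s') s'1; rewrite /hp_valid; lia.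
    by have [-> _] := Hinj _ _ _ _ vjs v' e; rewrite j'1 eqxx.
  rewrite j'1 => /orP [/eqP j1 | /andP [_ /eqP]]; last by move=> ?; move: vjs; rewrite /hp_valid; lia.
  have sk : (s < k.+1)%N by move: vjs; rewrite /hp_valid; lia.
  exists (Ordinal sk) => /=; rewrite -j1 eqxx andbT; move: vjs; rewrite /hp_valid; lia.
rewrite /hp_edgej !inE.
have -> : (lab j s == lab j'.-1 k) = (s == k) && (j' == j.+1).
  apply/eqP/andP => [e | [/eqP -> /eqP ->] //].
  have v' : hp_valid k d j'.-1 k by move: j'n1 j'r k2; rewrite /hp_valid; lia.
  have [e1 e2] := Hinj _ _ _ _ vjs v' e.
  by split; apply/eqP; lia.
have -> : [exists s' : 'I_k.+1, (2 <= s')%N && (lab j s == lab j' s')] = (j' == j).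
  apply/existsP/eqP => [[s' /andP [s'2 /eqP e]] | ej].
    have v' : hp_valid k d j' s' by move: (ltn_ord s') s'2 j'n1 j'r; rewrite /hp_valid; lia.
    by have [-> _] := Hinj _ _ _ _ vjs v' e.
  have sk : (s < k.+1)%N by move: vjs; rewrite /hp_valid; lia.
  exists (Ordinal sk) => /=; rewrite ej eqxx andbT; move: vjs j'n1 j'r; rewrite /hp_valid ej; lia.
by rewrite orbC.
Qed.

Lemma card_geq_ord N m : #|[set s : 'I_N | (m <= s)%N]| = (N - m)%N.
Proof.
rewrite -sum1_card.
rewrite (eq_bigl (fun i : 'I_N => (m <= i)%N)); last by move=> i; rewrite inE.
by rewrite -(big_geq_mkord m N xpredT (fun _ => 1%N)) sum_nat_const_nat muln1.
Qed.

Lemma inE_ed k d n lab (E : {set {set 'I_n}}) e : (1 <= d)%N ->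
  E = hp_edge1 n k lab |: [set hp_edgej n k lab j | j : 'I_d.+1 & (2 <= j)%N] ->
  reflect (exists2 j, (1 <= j <= d)%N & e = ed n k lab j) (e \in E).
Proof.
move=> d1 HE; rewrite HE !inE; apply: (iffP orP).
  case=> [/eqP -> | /imsetP [j' j'in ->]]; first by exists 1%N.
  move: j'in; rewrite inE => j'2.
  exists (nat_of_ord j'); first by move: (ltn_ord j') j'2; lia.
  by rewrite /ed; case: (nat_of_ord j' =P 1%N) => // e1; move: j'2; rewrite e1.
case=> j jr ->; rewrite /ed; case: (j =P 1%N) => [_|j1]; first by left.
right; apply/imsetP.
have jd : (j < d.+1)%N by lia.
exists (Ordinal jd) => //; rewrite inE /=; lia.
Qed.

Lemma card_ed k d n lab j : Linj k d n lab -> (3 <= k)%N -> (1 <= j <= d)%N ->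
  #|ed n k lab j| = k.
Proof.
move=> Hinj k3 jr; rewrite /ed; case: (j =P 1%N) => [j1 | j1].
  have -> : hp_edge1 n k lab = (fun s : 'I_k.+1 => lab 1%N s) @: [set s : 'I_k.+1 | (1 <= s)%N].
    apply/setP => v; rewrite !inE; apply/existsP/imsetP.
      by case=> s /andP [s1 /eqP ->]; exists s; rewrite ?inE.
    by case=> s; rewrite inE => s1 ->; exists s; rewrite s1 eqxx.
  rewrite card_in_imset ?card_geq_ord ?subn1 //.
  move=> s1 s2; rewrite !inE => h1 h2 e.
  apply: val_inj; have v1 : hp_valid k d 1 s1 by move: (ltn_ord s1) h1; rewrite /hp_valid; lia.
  have v2 : hp_valid k d 1 s2 by move: (ltn_ord s2) h2; rewrite /hp_valid; lia.
  by have [_ ] := Hinj _ _ _ _ v1 v2 e.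
have -> : hp_edgej n k lab j = lab j.-1 k |: (fun s : 'I_k.+1 => lab j s) @: [set s : 'I_k.+1 | (2 <= s)%N].
  apply/setP => v; rewrite !inE; congr (_ || _); apply/existsP/imsetP.
    by case=> s /andP [s1 /eqP ->]; exists s; rewrite ?inE.
  by case=> s; rewrite inE => s1 ->; exists s; rewrite s1 eqxx.
have vv : forall s : 'I_k.+1, (2 <= s)%N -> hp_valid k d j s.
  by move=> s s2; move: (ltn_ord s) s2 j1 jr; rewrite /hp_valid; lia.
rewrite cardsU1 card_in_imset ?card_geq_ord.
  have -> : (lab j.-1 k \notin [set lab j x | x : 'I_k.+1 & (2 <= x)%N]) = true.
    apply/negP => /imsetP [s]; rewrite inE => s2 e.
    have v' : hp_valid k d j.-1 k by move: j1 jr k3; rewrite /hp_valid; lia.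
    have [e1 _] := Hinj _ _ _ _ v' (vv s s2) e; lia.
  rewrite add1n subn2 /=; lia.
move=> s1 s2; rewrite !inE => h1 h2 e.
apply: val_inj; by have [_ ] := Hinj _ _ _ _ (vv _ h1) (vv _ h2) e.
Qed.

Lemma ed_neq k d n lab j : Linj k d n lab -> (3 <= k)%N -> (1 <= j)%N -> (j < d)%N ->
  ed n k lab j != ed n k lab j.+1.
Proof.
move=> Hinj k3 j1 jd; apply/negP => /eqP e.
have v : hp_valid k d j.+1 2 by rewrite /hp_valid; lia.
have m1 : lab j.+1 2 \in ed n k lab j.+1.
  by rewrite (@mem_ed k d n lab j.+1 2 j.+1 Hinj) ?eqxx //; lia.
have m2 : lab j.+1 2 \notin ed n k lab j.
  by rewrite (@mem_ed k d n lab j.+1 2 j Hinj) //; lia.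
by rewrite e m1 in m2.
Qed.

Lemma sum_S (R : realType) k d n lab (E : {set {set 'I_n}}) j s (F : {set 'I_n} -> R) :
  Linj k d n lab -> (3 <= k)%N -> (1 <= d)%N ->
  E = hp_edge1 n k lab |: [set hp_edgej n k lab j | j : 'I_d.+1 & (2 <= j)%N] ->
  hp_valid k d j s ->
  \sum_(e in [set e in E | lab j s \in e]) F e =
  F (ed n k lab j) + (if (s == k) && (j < d)%N then F (ed n k lab j.+1) else 0).
Proof.
move=> Hinj k3 d1 HE v.
have jr : (1 <= j <= d)%N by move: v; rewrite /hp_valid; lia.
have H : [set e in E | lab j s \in e] =
   if (s == k) && (j < d)%N then ed n k lab j |: [set ed n k lab j.+1] else [set ed n k lab j].
  apply/setP => e; rewrite !inE; apply/idP/idP.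
    case/andP => /(@inE_ed k d n lab E _ d1 HE) [j' j'r ->].
    rewrite (@mem_ed k d n lab) ?(ltnW k3) //; try lia.
    case/orP => [/eqP -> | /andP [/eqP sk /eqP ej']].
      by case: ifP; rewrite !inE eqxx.
    have -> : (j < d)%N by rewrite ej' in j'r; lia.
    by rewrite ej' sk eqxx /= !inE eqxx orbT.
  have h1 : (ed n k lab j \in E) && (lab j s \in ed n k lab j).
    apply/andP; split; first by apply/(@inE_ed k d n lab E _ d1 HE); exists j.
    by rewrite (@mem_ed k d n lab) ?eqxx //; lia.
  case: ifP => [/andP [/eqP sk jd] | _]; rewrite !inE; last by move/eqP ->.
  case/orP => /eqP -> //.
  apply/andP; split; first by apply/(@inE_ed k d n lab E _ d1 HE); exists j.+1 => //; lia.
  rewrite (@mem_ed k d n lab) ?(ltnW k3) //; try lia.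
rewrite H; case: ifP => [/andP [_ jd]|_]; last by rewrite big_set1 addr0.
rewrite big_setU1 ?big_set1 //= inE; apply: (@ed_neq k d n lab j Hinj k3 _ jd); lia.
Qed.

Lemma prod1 (R : realType) n (e : {set 'I_n}) (x : 'I_n -> R) y a :
  y \in e -> (forall u, u \in e -> u != y -> x u = a) ->
  \prod_(u in e) x u = x y * a ^+ #|e|.-1.
Proof.
move=> ye H; rewrite (big_setD1 y) //=; congr (_ * _).
rewrite (eq_bigr (fun=> a)); last by move=> u; rewrite !inE => /andP [uy ue]; apply: H.
by rewrite prodr_const (cardsD1 y e) ye.
Qed.

Lemma prod2 (R : realType) n (e : {set 'I_n}) (x : 'I_n -> R) y y' a :
  y \in e -> y' \in e -> y != y' -> (forall u, u \in e -> u != y -> u != y' -> x u = a) ->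
  \prod_(u in e) x u = x y * x y' * a ^+ #|e|.-2.
Proof.
move=> ye y'e yy H; rewrite (big_setD1 y) //= (big_setD1 y') /=; last by rewrite !inE eq_sym yy.
rewrite mulrA; congr (_ * _).
rewrite (eq_bigr (fun=> a)); last by move=> u; rewrite !inE => /and3P [uy' uy ue]; apply: H.
rewrite prodr_const (cardsD1 y e) ye (cardsD1 y' (e :\ y)) !inE eq_sym yy y'e /=.
by [].
Qed.

Lemma Pform (R : realType) k d n lab (E : {set {set 'I_n}}) (x : 'I_n -> R) mu j s :
  Linj k d n lab -> (3 <= k)%N -> (1 <= d)%N ->
  E = hp_edge1 n k lab |: [set hp_edgej n k lab j | j : 'I_d.+1 & (2 <= j)%N] ->
  (forall e, e \in E -> #|e| = k) ->
  hp_valid k d j s ->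
  tmul R n k (laplacian R n k E) x (lab j s) = mu * x (lab j s) ^+ k.-1 ->
  (x (lab j s) ^+ k - \prod_(u in ed n k lab j) x u) +
  (if (s == k) && (j < d)%N then x (lab j s) ^+ k - \prod_(u in ed n k lab j.+1) x u else 0)
  = mu * x (lab j s) ^+ k.
Proof.
move=> Hinj k3 d1 HE cE v H.
rewrite Lform // in H; last by lia.
have xk : x (lab j s) ^+ k = x (lab j s) * x (lab j s) ^+ k.-1.
  by rewrite -exprS prednK //; lia.
have := congr1 (fun z => x (lab j s) * z) H => /=.
rewrite mulr_sumr.
rewrite (eq_bigr (fun e : {set 'I_n} => x (lab j s) ^+ k - \prod_(u in e) x u)); last first.
  move=> e; rewrite inE => /andP [_ ve].
  by rewrite mulrBr xk (big_setD1 (lab j s) ve).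
rewrite (@sum_S R k d n lab E j s (fun e => x (lab j s) ^+ k - \prod_(u in e) x u)) //.
by move=> ->; rewrite xk; ring.
Qed.

Theorem proposition4p2 (R : realType) (k r n : nat) (E : {set {set 'I_n}}) :
  odd k -> (3 <= k)%N -> (3 <= r)%N -> is_hyperpath k r n E ->
  is_largest_H_eigenvalue R n k (laplacian R n k E) 2.
Proof.
move=> ok k3 r3 [lab [Hinj Hsurj HE]].
have d1 : (1 <= r)%N by lia.
have cE : forall e, e \in E -> #|e| = k.
  by move=> e /(@inE_ed k r n lab E e d1 HE) [j jr ->]; exact: (@card_ed k r n lab j Hinj k3 jr).
split.
  pose u := lab 1%N k.
  exists (fun v => if v == u then 1 else 0 : R); split; first by exists u; rewrite eqxx oner_neq0.
  move=> i; rewrite Lform //; last by lia.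
  have P0 : forall e, e \in [set e in E | i \in e] ->
      \prod_(w in e :\ i) (if w == u then 1 else 0 : R) = 0.
    move=> e; rewrite inE => /andP [eE ie].
    have : (0 < #|e :\ i :\ u|)%N.
      have h : #|e| = ((i \in e) + ((u \in e :\ i) + #|e :\ i :\ u|))%N by rewrite -!cardsD1.
      move: h; rewrite cE // ie; case: (u \in e :\ i) => /=; lia.
    case/card_gt0P => w; rewrite !inE => /and3P [wu wi we].
    by rewrite (big_setD1 w) /=; [rewrite (negPf wu) mul0r | rewrite !inE wi we].
  have [ei | iu] := eqVneq i u.
    subst i.
    rewrite expr1n mulr1.
    rewrite (eq_bigr (fun _ => 1)) => [|e eS]; last by rewrite P0 // subr0.
    have v1 : hp_valid k r 1 k by rewrite /hp_valid; lia.
    rewrite (@sum_S R k r n lab E 1%N k (fun _ => 1)) //.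
    by rewrite eqxx /= (_ : (1 < r)%N) //; lia.
  rewrite expr0n (_ : (k.-1 == 0)%N = false) /= ?mulr0; last by lia.
  by rewrite big1 // => e eS; rewrite P0 // subr0.
move=> mu [x [[i0 xi0] Hx]].
rewrite leNgt; apply/negP => mu2.
pose a j := x (lab j 2%N); pose y j := x (lab j k); pose P j := \prod_(u in ed n k lab j) x u.
have PF : forall j s, hp_valid k r j s ->
    (x (lab j s) ^+ k - P j) + (if (s == k) && (j < r)%N then x (lab j s) ^+ k - P j.+1 else 0)
    = mu * x (lab j s) ^+ k.
  by move=> j s v; apply: (@Pform R k r n lab E x mu j s Hinj k3 d1 HE cE v (Hx _)).
have pend : forall j s, hp_valid k r j s -> ~~ ((s == k) && (j < r)%N) ->
    P j = (1 - mu) * x (lab j s) ^+ k.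
  move=> j s v ns; have := PF j s v; rewrite (negPf ns) addr0 => H; lra.
have Pa : forall j, (1 <= j <= r)%N -> P j = (1 - mu) * a j ^+ k.
  move=> j jr; apply: pend; rewrite /hp_valid; lia.
have mu1 : 1 - mu != 0 by apply/eqP; lra.
have pval : forall j s, hp_valid k r j s -> ~~ ((s == k) && (j < r)%N) -> x (lab j s) = a j.
  move=> j s v ns; apply: (oddpow_inj ok); apply: (mulfI mu1).
  rewrite -pend // -Pa //; move: v; rewrite /hp_valid; lia.
have inval : forall j u, (1 <= j <= r)%N -> u \in ed n k lab j ->
    ((1 < j)%N -> u != lab j.-1 k) -> ((j < r)%N -> u != lab j k) -> x u = a j.
  move=> j u jr ue h1 h2; have [j' [s' [v' eu]]] := Hsurj u; rewrite eu in ue h1 h2 *.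
  rewrite (@mem_ed k r n lab j' s' j Hinj) // in ue; last by lia.
  case/orP: ue => [/eqP ejj | /andP [/eqP sk /eqP ej]].
    rewrite -ejj in v' h2 *; apply: pval => //.
    by apply/negP => /andP [/eqP sk jd]; move: (h2 jd); rewrite sk eqxx.
  have : (1 < j)%N by move: v'; rewrite /hp_valid; lia.
  by move/h1; rewrite ej sk /= eqxx.
have memk : forall j, (1 <= j <= r)%N -> lab j k \in ed n k lab j.
  move=> j jr; rewrite (@mem_ed k r n lab j k j Hinj) ?eqxx //; rewrite /hp_valid; lia.
have memk' : forall j, (2 <= j <= r)%N -> lab j.-1 k \in ed n k lab j.
  move=> j jr; rewrite (@mem_ed k r n lab j.-1 k j Hinj) //; try (rewrite /hp_valid; lia).
have neqk : forall j, (2 <= j <= r)%N -> lab j.-1 k != lab j k.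
  move=> j jr; apply/eqP => e.
  have v1 : hp_valid k r j.-1 k by rewrite /hp_valid; lia.
  have v2 : hp_valid k r j k by rewrite /hp_valid; lia.
  have [e1 _] := Hinj _ _ _ _ v1 v2 e; lia.
have cek : forall j, (1 <= j <= r)%N -> #|ed n k lab j| = k.
  by move=> j jr; apply: (@card_ed k r n lab j Hinj k3 jr).
have P1 : P 1%N = y 1%N * a 1%N ^+ k.-1.
  rewrite /P (@prod1 R n _ x (lab 1%N k) (a 1%N)) ?cek //; try lia.
  - by apply: memk; lia.
  - move=> u ue uk; apply: inval => //; lia.
have Pm : forall j, (2 <= j)%N -> (j < r)%N -> P j = y j.-1 * y j * a j ^+ k.-2.
  move=> j j2 jr; rewrite /P (@prod2 R n _ x (lab j.-1 k) (lab j k) (a j)) ?cek //; try lia.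
  - by apply: memk'; lia.
  - by apply: memk; lia.
  - by apply: neqk; lia.
  - move=> u ue u1 u2; apply: inval => //; lia.
have Pd : P r = y r.-1 * a r ^+ k.-1.
  rewrite /P (@prod1 R n _ x (lab r.-1 k) (a r)) ?cek //; try lia.
  - by apply: memk'; lia.
  - move=> u ue uk; apply: inval => //; [lia|by rewrite ltnn].
have Sh : forall j, (1 <= j)%N -> (j < r)%N ->
    (y j ^+ k - P j) + (y j ^+ k - P j.+1) = mu * y j ^+ k.
  move=> j j1 jr; have := PF j k (_ : hp_valid k r j k).
  rewrite eqxx jr /=; apply; rewrite /hp_valid; lia.
have W : forall j, (1 <= j)%N -> (j < r)%N -> a j * y j <= 0.
  elim=> // j IH _ jr.
  have [j0 | jp] := posnP j.
    subst j; apply: (@base_lem R k mu); [lra | lia |].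
    by rewrite -P1 Pa //; lia.
  have jr1 : (1 <= j <= r)%N by lia.
  have jr2 : (1 <= j.+1 <= r)%N by lia.
  have [H1 _] := step_lem mu2 ok (IH jp (ltnW jr)) (Sh j jp (ltnW jr)) (Pa j jr1) (Pa j.+1 jr2).
  apply: (@mid_lem R k mu (a j.+1) (y j) (y j.+1)); [lra | lia | exact H1 |].
  have -> : y j * y j.+1 * a j.+1 ^+ k.-2 = P j.+1 by rewrite (Pm j.+1) //; lia.
  exact: Pa.
have r1 : (1 <= r.-1)%N by lia.
have rr : (r.-1 < r)%N by lia.
have er : r.-1.+1 = r by lia.
have Ad : a r = 0.
  have jr1 : (1 <= r.-1 <= r)%N by lia.
  have jr2 : (1 <= r.-1.+1 <= r)%N by lia.
  have [H1 _] := step_lem mu2 ok (W _ r1 rr) (Sh _ r1 rr) (Pa _ jr1) (Pa _ jr2).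
  rewrite er in H1.
  apply: (@end_lem R k mu (a r) (y r.-1)); [lra | lia | exact H1 |].
  by rewrite -Pd Pa //; lia.
have Zs : forall j, (1 <= j)%N -> (j < r)%N -> a j.+1 = 0 -> a j = 0 /\ y j = 0.
  move=> j j1 jr.
  have jr1 : (1 <= j <= r)%N by lia.
  have jr2 : (1 <= j.+1 <= r)%N by lia.
  by have [_ H2] := step_lem mu2 ok (W _ j1 jr) (Sh _ j1 jr) (Pa _ jr1) (Pa _ jr2).
have Z : forall m, (m < r)%N -> a (r - m)%N = 0.
  elim=> [|m IH] hm; first by rewrite subn0.
  have ej : (r - m.+1).+1 = (r - m)%N by lia.
  have [] := Zs (r - m.+1)%N _ _ _ => //; try lia.
  by rewrite ej; apply: IH; lia.
have A0 : forall j, (1 <= j <= r)%N -> a j = 0.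
  move=> j jr; have := Z (r - j)%N _; rewrite (_ : (r - (r - j))%N = j); [apply; lia | lia].
have Y0 : forall j, (1 <= j)%N -> (j < r)%N -> y j = 0.
  move=> j j1 jr; have [] := Zs j j1 jr => //; apply: A0; lia.
have [j [s [v ei]]] := Hsurj i0.
move: xi0; rewrite ei.
have [/andP [/eqP sk jr] | ns] := boolP ((s == k) && (j < r)%N).
  rewrite sk -/(y j) Y0 ?eqxx //; move: v; rewrite /hp_valid; lia.
rewrite pval // A0 ?eqxx //; move: v; rewrite /hp_valid; lia.
Qed.
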